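(* For $n \ge 8$, let $\mu'(n)$ be the minimum number of edges of a (not necessarily connected) non-prime graph of order $n$. Then $\mu'(n) \le n$.
   Context: Graphs are finite and simple. A prime labeling of a graph $G$ of order $n$ is a bijection $\alpha: V(G) \to \{1,2,\dots,n\}$ such that $\gcd(\alpha(u),\alpha(v)) = 1$ for every edge $uv \in E(G)$. $G$ is prime if it admits a prime labeling, and non-prime otherwise. *)

(* Defs.v *)
From mathcomp Require Import all_boot.
Set Implicit Arguments. Unset Strict Implicit. Unset Printing Implicit Defensive.

Definition simple_graph (n : nat) (e : rel 'I_n) : Prop :=
  symmetric e /\ irreflexive e.

Definition num_edges (n : nat) (e : rel 'I_n) : nat :=
  #|[set p : 'I_n * 'I_n | e p.1 p.2 && (p.1 < p.2)]|.

(* A prime labeling: a bijection alpha : V -> {1..n}; we encode it as a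
   bijection f : 'I_n -> 'I_n with alpha v = (f v).+1. *)
Definition prime_labeling (n : nat) (e : rel 'I_n) (f : 'I_n -> 'I_n) : Prop :=
  bijective f /\ forall u v, e u v -> coprime (f u).+1 (f v).+1.

Definition is_prime_graph (n : nat) (e : rel 'I_n) : Prop :=
  exists f : 'I_n -> 'I_n, prime_labeling e f.

(* Main.v *)
Require Import Defs.
From mathcomp Require Import all_boot zify.

Lemma codd n : #|[set k : 'I_n | odd k]| = n./2.
Proof.
rewrite cardsE -sum1_card big_mkcond /=.
elim: n => [|n IH]; first by rewrite big_ord0.
rewrite big_ord_recr /= -(eq_bigr _ (fun i _ => erefl)) IH.
rewrite uphalf_half unfold_in /=; case: (odd n) => /=; lia.
Qed.

Lemma noncop a b : odd a -> odd b -> ~~ coprime a.+1 b.+1.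
Proof.
move=> ha hb; apply/negP => /eqP hg.
have : 2 %| gcdn a.+1 b.+1 by rewrite dvdn_gcd !dvdn2 /= ha hb.
by rewrite hg.
Qed.

Theorem theorem10p5 (n : nat) (hn : 8 <= n) :
  exists e : rel 'I_n,
    simple_graph e /\ ~ is_prime_graph e /\ num_edges e <= n.
Proof.
exists [rel i j : 'I_n | (i != j) && (i %/ 3 == j %/ 3)].
split; [split|split].
- by move=> i j /=; rewrite eq_sym [X in _ && X]eq_sym.
- by move=> i /=; rewrite eqxx.
- move=> [f [[g fK gK] hf]].
  pose S := f @^-1: [set k : 'I_n | odd k].
  have cS : #|S| = n./2 by rewrite card_preimset ?codd //; exact: can_inj fK.
  pose h (v : 'I_n) : 'I_((n.-1) %/ 3).+1 := inord (v %/ 3).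
  have : #|S| <= #|'I_((n.-1) %/ 3).+1|.
    apply: (@leq_card_in _ _ h) => u v; rewrite !inE => hu hv.
    rewrite /h => /(congr1 val) /=; rewrite !inordK; try (have := ltn_ord u; have := ltn_ord v; lia).
    move=> huv; case: (eqVneq u v) => // nuv.
    have := hf u v; rewrite /= nuv huv eqxx => /(_ isT).
    by move/negP: (noncop _ _ hu hv).
  rewrite cS card_ord; lia.
- rewrite /num_edges.
  set P := [set _ | _].
  pose g (p : 'I_n * 'I_n) := if val p.2 == p.1.+1 then p.2 else p.1.
  rewrite -[n in _ <= n]card_ord; apply: (@leq_card_in _ _ g).
  move=> [a b] [c d]; rewrite !inE /= /g => /andP[/andP[hab eab] lab] /andP[/andP[hcd ecd] lcd].
  move=> E; congr pair; apply/val_inj; move: E;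
  (case: eqP => /= H1; case: eqP => /= H2 E; have := congr1 val E => /= {}E);
  move/eqP: eab; move/eqP: ecd; lia.
Qed.
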